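(* Let $\Phi$ be a countable measure-determining class of measurable functions $\phi:\mathbb{R}\to\mathbb{R}$ with $\|\phi\|_\infty\le1$, and let $$\Phi_1=\Big\{\tfrac{f+cg}{\|f+cg\|_\infty}:\ f,g\in\Phi,\ c\in\mathbb{Q},\ f+cg\not\equiv0\Big\}.$$ Let $\alpha,\mu,\nu$ be Borel probability measures on $\mathbb{R}$ with $\mu\neq\alpha$, $\nu\neq\alpha$ and $\mu\neq\nu$. For a bounded measurable $\psi$ write $\psi_0=\psi-\int\psi\,d\alpha$. Then there exists $\psi\in\Phi_1$ with $$\int\psi_0\,d\mu\neq0,\qquad \int\psi_0\,d\nu\neq0,\qquad \int\psi_0\,d\mu\neq\int\psi_0\,d\nu.$$
   Context: A class $\Phi$ of measurable functions on $\mathbb{R}$ is measure determining if, for Borel probability measures $\mu,\nu$, $\int\phi\,d\mu=\int\phi\,d\nu$ for all $\phi\in\Phi$ implies $\mu=\nu$. *)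

(* Defs.v *)
From HB Require Import structures.
From mathcomp Require Import all_boot all_order all_algebra.
From mathcomp Require Import all_classical all_reals all_analysis.
Set Implicit Arguments. Unset Strict Implicit. Unset Printing Implicit Defensive.
Import Order.TTheory GRing.Theory Num.Theory.
Local Open Scope classical_set_scope.
Local Open Scope ring_scope.

Definition meas_eq (R : realType) (mu nu : probability R R) : Prop :=
  forall A : set R, measurable A -> mu A = nu A.

Definition measure_determining (R : realType) (Phi : set (R -> R)) : Prop :=
  forall mu nu : probability R R,
    (forall phi, Phi phi ->
       (\int[mu]_x (phi x)%:E = \int[nu]_x (phi x)%:E)%E) ->
    meas_eq mu nu.

Definition supnorm (R : realType) (f : R -> R) : R :=
  fine (ereal_sup (range (fun x => (`|f x|)%:E))).

Definition Phi1 (R : realType) (Phi : set (R -> R)) : set (R -> R) :=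
  [set h | exists (f g : R -> R) (c : rat),
     [/\ Phi f, Phi g, (exists x, f x + ratr c * g x != 0) &
         h = (fun x => (f x + ratr c * g x) /
                       supnorm (fun y => f y + ratr c * g y))]].

Definition centered (R : realType) (alpha : probability R R) (psi : R -> R)
  : R -> R := fun x => psi x - Rintegral alpha setT psi.

(* Main.v *)
Require Import Defs.
From HB Require Import structures.
From mathcomp Require Import all_boot all_order all_algebra.
From mathcomp Require Import all_classical all_reals all_analysis.
From mathcomp Require Import measurable_realfun.
From mathcomp Require Import ring.
Import Order.TTheory GRing.Theory Num.Theory.
Local Open Scope classical_set_scope.
Local Open Scope ring_scope.

Section helpers.
Context {R : realType}.

Lemma bnd_int (m : probability R R) (f : R -> R) (M : R) :
  measurable_fun setT f -> (forall x, `|f x| <= M) ->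
  m.-integrable setT (EFin \o f).
Proof.
move=> mf fM; apply/integrableP; split; first exact/measurable_EFinP.
apply: (@le_lt_trans _ _ (`|M|%:E * m setT)%E).
  apply: integral_le_bound => //; first exact/measurable_EFinP.
  by apply: aeW => x _; rewrite /= lee_fin (le_trans (fM x)) // ler_norm.
have -> : m setT = 1%E by exact: probability_setT.
by rewrite mule1 ltry.
Qed.

Arguments bnd_int m {f M}.

Lemma Rint_cst (m : probability R R) (r : R) :
  Rintegral m setT (fun _ => r) = r.
Proof.
rewrite Rintegral_cst //; transitivity (r * fine (1%E : \bar R)); last by rewrite /= mulr1.
by congr (_ * fine _); exact: probability_setT.
Qed.

Lemma centered_int (m alpha : probability R R) (psi : R -> R) :
  m.-integrable setT (EFin \o psi) ->
  Rintegral m setT (centered alpha psi) =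
  Rintegral m setT psi - Rintegral alpha setT psi.
Proof.
move=> ip; rewrite /centered RintegralB //; last first.
  exact: finite_measure_integrable_cst.
by rewrite Rint_cst.
Qed.

Lemma pair_choice (x1 y1 x2 y2 x3 y3 : R) :
  (x1 != 0) || (y1 != 0) -> (x2 != 0) || (y2 != 0) -> (x3 != 0) || (y3 != 0) ->
  exists c : rat, [/\ x1 + ratr c * y1 != 0, x2 + ratr c * y2 != 0 &
                      x3 + ratr c * y3 != 0].
Proof.
have U : forall x y : R, (x != 0) || (y != 0) -> forall c c' : R,
    x + c * y = 0 -> x + c' * y = 0 -> c = c'.
  move=> x y xy c c' h1 h2.
  have : (c - c') * y = 0 by rewrite mulrBl; apply/eqP; rewrite subr_eq0;
    apply/eqP; apply: (addrI x); rewrite h1 h2.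
  move/eqP; rewrite mulf_eq0 subr_eq0 => /orP[/eqP //|/eqP y0].
  by move: xy h1; rewrite y0 mulr0 addr0 eqxx orbF => /eqP.
move=> h1 h2 h3.
pose P (k : nat) := [/\ x1 + ratr (k%:R : rat) * y1 != 0,
   x2 + ratr (k%:R : rat) * y2 != 0 & x3 + ratr (k%:R : rat) * y3 != 0].
have ne : forall i j : nat, (i%:R : R) = j%:R -> i = j.
  by move=> i j /eqP; rewrite eqr_nat => /eqP.
have D : forall k : nat, ~ P k ->
   [\/ x1 + (k%:R : R) * y1 = 0, x2 + (k%:R : R) * y2 = 0 |
       x3 + (k%:R : R) * y3 = 0].
  move=> k H; apply: contra_notP H => H; rewrite /P ratr_nat.
  by split; apply/eqP => E; apply: H; [exact: Or31|exact: Or32|exact: Or33].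
have [H|/D A0] := pselect (P 0%N); first by eexists; exact: H.
have [H|/D A1] := pselect (P 1%N); first by eexists; exact: H.
have [H|/D A2] := pselect (P 2%N); first by eexists; exact: H.
have [H|/D A3] := pselect (P 3%N); first by eexists; exact: H.
exfalso.
case: A0 => B0; case: A1 => B1; case: A2 => B2; case: A3 => B3;
  solve [ match goal with
  | H : x1 + ?a * y1 = 0, H' : x1 + ?b * y1 = 0 |- _ =>
      have := ne _ _ (U _ _ h1 _ _ H H') => //
  | H : x2 + ?a * y2 = 0, H' : x2 + ?b * y2 = 0 |- _ =>
      have := ne _ _ (U _ _ h2 _ _ H H') => //
  | H : x3 + ?a * y3 = 0, H' : x3 + ?b * y3 = 0 |- _ =>
      have := ne _ _ (U _ _ h3 _ _ H H') => //
  end ].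
Qed.


Lemma witness (Phi : set (R -> R))
  (Phi_meas : forall phi, Phi phi -> measurable_fun setT phi)
  (Phi_bnd : forall phi, Phi phi -> forall x, `|phi x| <= 1)
  (Phi_det : measure_determining Phi) (m1 m2 : probability R R) :
  ~ meas_eq m1 m2 -> exists phi, Phi phi /\
    Rintegral m1 setT phi != Rintegral m2 setT phi.
Proof.
move=> neq; have [//|N] := pselect (exists phi, Phi phi /\
    Rintegral m1 setT phi != Rintegral m2 setT phi).
exfalso; apply: neq; apply: Phi_det => phi Pphi.
have E : Rintegral m1 setT phi = Rintegral m2 setT phi.
  by apply/eqP; apply: contra_notT N => H; exists phi.
have F1 : (\int[m1]_x (phi x)%:E)%E \is a fin_num.
  by apply: integrable_fin_num => //; exact: (bnd_int m1 (Phi_meas _ Pphi) (Phi_bnd _ Pphi)).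
have F2 : (\int[m2]_x (phi x)%:E)%E \is a fin_num.
  by apply: integrable_fin_num => //; exact: (bnd_int m2 (Phi_meas _ Pphi) (Phi_bnd _ Pphi)).
rewrite -[LHS]fineK // -[RHS]fineK //; congr EFin; exact: E.
Qed.

End helpers.
Arguments bnd_int {R} m {f M}.

Theorem lemma3p5 (R : realType) (Phi : set (R -> R))
  (Phi_count : countable Phi)
  (Phi_meas : forall phi, Phi phi -> measurable_fun setT phi)
  (Phi_bnd : forall phi, Phi phi -> forall x, `|phi x| <= 1)
  (Phi_det : measure_determining Phi)
  (alpha mu nu : probability R R)
  (mu_alpha : ~ meas_eq mu alpha) (nu_alpha : ~ meas_eq nu alpha)
  (mu_nu : ~ meas_eq mu nu) :
  exists psi, Phi1 Phi psi /\
    [/\ Rintegral mu setT (centered alpha psi) != 0,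
        Rintegral nu setT (centered alpha psi) != 0 &
        Rintegral mu setT (centered alpha psi) !=
        Rintegral nu setT (centered alpha psi)].
Proof.
have wit := @witness R Phi Phi_meas Phi_bnd Phi_det.

pose I (m : probability R R) (f : R -> R) := Rintegral m setT f.
have [f [Pf af]] := wit mu alpha mu_alpha.
have [g [Pg [G1 G2 G3]]] : exists g, Phi g /\
   [/\ (I mu f - I alpha f != 0) || (I mu g - I alpha g != 0),
       (I nu f - I alpha f != 0) || (I nu g - I alpha g != 0) &
       ((I mu f - I alpha f) - (I nu f - I alpha f) != 0) ||
       ((I mu g - I alpha g) - (I nu g - I alpha g) != 0)].
  have afn : I mu f - I alpha f != 0 by rewrite subr_eq0.
  have [bf0|bfn] := eqVneq (I nu f - I alpha f) 0.
    have [g [Pg bg]] := wit nu alpha nu_alpha.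
    exists g; split => //; split.
    - by apply/orP; left.
    - by apply/orP; right; rewrite subr_eq0.
    - by apply/orP; left; rewrite bf0 subr0.
  have [eab|nab] := eqVneq (I mu f) (I nu f).
    have [g [Pg bg]] := wit mu nu mu_nu.
    exists g; split => //; split.
    - by apply/orP; left.
    - by apply/orP; left.
    - apply/orP; right; rewrite (_ : _ - _ - _ = I mu g - I nu g); [by rewrite subr_eq0|ring].
  exists f; split => //; split.
  - by apply/orP; left.
  - by apply/orP; left.
  - apply/orP; left; rewrite (_ : _ - _ - _ = I mu f - I nu f); [by rewrite subr_eq0|ring].
have [c [C1 C2 C3]] := @pair_choice R _ _ _ _ _ _ G1 G2 G3.
set r : R := ratr c in C1 C2 C3.
pose h := fun x => f x + r * g x.
have mh : measurable_fun setT h.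
  apply: measurable_funD; first exact: Phi_meas.
  apply: measurable_funM; [exact: measurable_cst | exact: Phi_meas].
have hb : forall x, `|h x| <= 1 + `|r|.
  move=> x; apply: (le_trans (ler_normD _ _)); apply: lerD; first exact: Phi_bnd.
  by rewrite normrM -[leRHS]mulr1; apply: ler_wpM2l => //; exact: Phi_bnd.
have inth : forall m : probability R R, m.-integrable setT (EFin \o h).
  by move=> m; exact: bnd_int mh hb.
have intf : forall m : probability R R, m.-integrable setT (EFin \o f).
  by move=> m; exact: bnd_int (Phi_meas _ Pf) (Phi_bnd _ Pf).
have intg : forall m : probability R R, m.-integrable setT (EFin \o g).
  by move=> m; exact: bnd_int (Phi_meas _ Pg) (Phi_bnd _ Pg).
have lin : forall m : probability R R, I m h = I m f + r * I m g.
  move=> m; rewrite /I /h RintegralD //; last first.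
  - by apply: (bnd_int m (M := `|r|)); [apply: measurable_funM;
      [exact: measurable_cst | exact: Phi_meas] |
      move=> x; rewrite normrM -[leRHS]mulr1; apply: ler_wpM2l => //; exact: Phi_bnd].
  - exact: intf.
  apply: (f_equal2 +%R) => //. apply: RintegralZl => //. exact: intg.
have key : forall m : probability R R, I m h - I alpha h =
    (I m f - I alpha f) + r * (I m g - I alpha g).
  by move=> m; rewrite !lin; ring.
have [x0 hx0] : exists x, h x != 0.
  have [//|N] := pselect (exists x, h x != 0).
  have h0 : forall x, h x = 0.
    by move=> x; apply/eqP; apply: contra_notT N => hx; exists x.
  have Ih : forall m : probability R R, I m h = 0.
    move=> m; rewrite /I; transitivity (Rintegral m setT (fun _ : R => 0)); last exact: Rint_cst.
    apply: eq_Rintegral => x _; exact: h0.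
  by move: C1; rewrite -key !Ih subrr eqxx.
pose s := supnorm h.
have s0 : 0 < s.
  rewrite /s /supnorm; apply: fine_gt0; apply/andP; split.
  - apply: (@lt_le_trans _ _ (`|h x0|%:E)); first by rewrite lte_fin normr_gt0.
    by apply: ereal_sup_ubound; exists x0.
  - apply: (@le_lt_trans _ _ ((1 + `|r|)%:E)); last exact: ltry.
    by apply: ge_ereal_sup => _ [y _ <-]; rewrite lee_fin hb.
pose psi := fun x => h x / s.
have val : forall m : probability R R, Rintegral m setT (centered alpha psi) =
    ((I m f - I alpha f) + r * (I m g - I alpha g)) / s.
  move=> m; rewrite -key centered_int; last first.
    apply: (bnd_int m (M := (1 + `|r|) / s)).
      by apply: measurable_funM; [exact: mh | exact: measurable_cst].
    move=> x; rewrite /psi normrM normfV (gtr0_norm s0); apply: ler_wpM2r.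
      by rewrite invr_ge0 ltW.
    exact: hb.
  rewrite /psi /I mulrBl; apply: (f_equal2 (fun a b => a - b)); apply: RintegralZr => //; exact: inth.
exists psi; split.
  by exists f, g, c; split => //; exists x0.
have sne : s^-1 != 0 by rewrite invr_neq0 // gt_eqF.
rewrite !val; split.
- by rewrite mulf_neq0.
- by rewrite mulf_neq0.
- apply/negP => /eqP E; have XY := mulIf sne E.
  move/eqP: C3; apply.
  rewrite -[RHS](subrr (I nu f - I alpha f + r * (I nu g - I alpha g))).
  rewrite -{1}XY; ring.
Qed.
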